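(* Let $(M_t)_{t\ge0}$, $(N_t)_{t\ge0}$ be $d$-dimensional processes with independent increments on sublinear expectation spaces $(\Omega_1,\mathcal{H}_1,\hat{\mathbb{E}}_1)$, $(\Omega_2,\mathcal{H}_2,\hat{\mathbb{E}}_2)$ satisfying condition (A) of the context. Let $\Omega=\Omega_1\times\Omega_2$, and for $\omega=(\omega_1,\omega_2)$ and $t\in[0,1]$ put $\tilde M_t(\omega)=M_t(\omega_1)$, $\tilde N_t(\omega)=N_t(\omega_2)$, $X_t=(\tilde M_t,\tilde N_t)$. Fix $n\ge1$, $\delta_n=2^{-n}$, let $\mathcal{H}^n=\{\varphi(X_{\delta_n},X_{2\delta_n}-X_{\delta_n},\dots,X_{2^n\delta_n}-X_{(2^n-1)\delta_n}):\varphi\in C_{b.Lip}(\mathbb{R}^{2^n\times2d})\}$, and define $\hat{\mathbb{E}}^n:\mathcal{H}^n\to\mathbb{R}$ as follows. Step 1: for $k\le 2^n$ and $\phi\in C_{b.Lip}(\mathbb{R}^{2d})$, $\hat{\mathbb{E}}^n[\phi(X_{k\delta_n}-X_{(k-1)\delta_n})]=\hat{\mathbb{E}}_1[\psi(M_{k\delta_n}-M_{(k-1)\delta_n})]$ where $\psi(x)=\hat{\mathbb{E}}_2[\phi(x,N_{k\delta_n}-N_{(k-1)\delta_n})]$, $x\in\mathbb{R}^d$. Step 2: for $\varphi\in C_{b.Lip}(\mathbb{R}^{2^n\times2d})$, $\hat{\mathbb{E}}^n[\varphi(X_{\delta_n},\dots,X_{2^n\delta_n}-X_{(2^n-1)\delta_n})]=\varphi_0$,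 where $\varphi_{2^n}=\varphi$ and, backwards for $k=2^n,\dots,1$, $\varphi_{k-1}(x_1,\dots,x_{k-1})=\hat{\mathbb{E}}^n[\varphi_k(x_1,\dots,x_{k-1},X_{k\delta_n}-X_{(k-1)\delta_n})]$ computed by Step 1. Then: (1) $(\Omega,\mathcal{H}^n,\hat{\mathbb{E}}^n)$ is a sublinear expectation space; (2) for each $2\le k\le 2^n$, $X_{k\delta_n}-X_{(k-1)\delta_n}$ is independent from $(X_{\delta_n},\dots,X_{(k-1)\delta_n}-X_{(k-2)\delta_n})$ under $\hat{\mathbb{E}}^n$; (3) $(\tilde M_{\delta_n},\tilde M_{2\delta_n}-\tilde M_{\delta_n},\dots,\tilde M_{2^n\delta_n}-\tilde M_{(2^n-1)\delta_n})$ under $\hat{\mathbb{E}}^n$ has the same distribution as $(M_{\delta_n},M_{2\delta_n}-M_{\delta_n},\dots,M_{2^n\delta_n}-M_{(2^n-1)\delta_n})$ under $\hat{\mathbb{E}}_1$, and likewise $(\tilde N_{\delta_n},\dots,\tilde N_{2^n\delta_n}-\tilde N_{(2^n-1)\delta_n})\overset{d}{=}(N_{\delta_n},\dots,N_{2^n\delta_n}-N_{(2^n-1)\delta_n})$.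
   Context: $C_{b.Lip}(\mathbb{R}^d)$: bounded Lipschitz functions. A sublinear expectation space $(\Omega,\mathcal{H},\hat{\mathbb{E}})$: $\mathcal{H}$ is a linear space of real functions on $\Omega$ closed under composition with $C_{b.Lip}$ functions, and $\hat{\mathbb{E}}:\mathcal{H}\to\mathbb{R}$ is monotone, constant preserving, subadditive, positively homogeneous. A sublinear $\tilde{\mathbb{E}}$ dominates $\hat{\mathbb{E}}$ if $\hat{\mathbb{E}}[X]-\hat{\mathbb{E}}[Y]\le\tilde{\mathbb{E}}[X-Y]$. Condition (A): there exist sublinear expectations $\tilde{\mathbb{E}}_i$ on $\mathcal{H}_i$ dominating $\hat{\mathbb{E}}_i$ ($i=1,2$) with $\lim_{s\to t}(\tilde{\mathbb{E}}_1[|M_s-M_t|]+\tilde{\mathbb{E}}_2[|N_s-N_t|])=0$ for each $t\ge0$. $Y$ is independent from $X$ under $\hat{\mathbb{E}}$ if $\hat{\mathbb{E}}[\varphi(X,Y)]=\hat{\mathbb{E}}[\hat{\mathbb{E}}[\varphi(x,Y)]_{x=X}]$ for all bounded Lipschitz $\varphi$. A process with $X_0=0$ has independent increments if for all $t_1<\dots<t_n$, $X_{t_n}-X_{t_{n-1}}$ is independent from $(X_{t_1},\dots,X_{t_{n-1}})$. $\overset{d}{=}$ means equal expectations of $\varphi(\cdot)$ for all bounded Lipschitz $\varphi$. *)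

(* Defs.v *)
From HB Require Import structures.
From mathcomp Require Import all_boot all_order all_algebra.
From mathcomp Require Import boolp reals.
Set Implicit Arguments. Unset Strict Implicit. Unset Printing Implicit Defensive.
Import Order.TTheory GRing.Theory Num.Theory.
Local Open Scope ring_scope.

(* Sup norm on matrices (used only to define Lipschitz continuity; all norms
   on R^k are equivalent, so the class C_{b.Lip} does not depend on it). *)
Definition mxnorm (R : realType) (p q : nat) (x : 'M[R]_(p, q)) : R :=
  \big[Num.max/0]_(i < p) \big[Num.max/0]_(j < q) `|x i j|.

Definition enorm (R : realType) (d : nat) (x : 'rV[R]_d) : R :=
  Num.sqrt (\sum_(i < d) x 0 i ^+ 2).

Definition bLip (R : realType) (p q : nat) (f : 'M[R]_(p, q) -> R) : Prop :=
  (exists C : R, forall x, `|f x| <= C) /\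
  (exists L : R, forall x y, `|f x - f y| <= L * mxnorm (x - y)).

Definition bLip2 (R : realType) (p q r s : nat)
  (f : 'M[R]_(p, q) -> 'M[R]_(r, s) -> R) : Prop :=
  (exists C : R, forall x y, `|f x y| <= C) /\
  (exists L : R, forall x x' y y',
      `|f x y - f x' y'| <= L * (mxnorm (x - x') + mxnorm (y - y'))).

(* (Omega, H, E) is a sublinear expectation space.  H is a set of real
   functions on Omega; E is only constrained on H. *)
Record sublinear_space (R : realType) (Omega : Type)
    (H : (Omega -> R) -> Prop) (E : (Omega -> R) -> R) : Prop := {
  sl_add : forall X Y, H X -> H Y -> H (fun w => X w + Y w);
  sl_scale : forall (c : R) X, H X -> H (fun w => c * X w);
  sl_comp : forall (m : nat) (X : Omega -> 'rV[R]_m) (phi : 'rV[R]_m -> R),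
      (forall i, H (fun w => X w 0 i)) -> bLip phi -> H (fun w => phi (X w));
  sl_mono : forall X Y, H X -> H Y -> (forall w, X w <= Y w) -> E X <= E Y;
  sl_const : forall c : R, E (fun _ => c) = c;
  sl_subadd : forall X Y, H X -> H Y -> E (fun w => X w + Y w) <= E X + E Y;
  sl_homog : forall (l : R) X, 0 <= l -> H X -> E (fun w => l * X w) = l * E X
}.

Definition indep (R : realType) (Omega : Type) (E : (Omega -> R) -> R)
    (p q r s : nat) (X : Omega -> 'M[R]_(p, q)) (Y : Omega -> 'M[R]_(r, s)) : Prop :=
  forall phi : 'M[R]_(p, q) -> 'M[R]_(r, s) -> R, bLip2 phi ->
    E (fun w => phi (X w) (Y w)) = E (fun w => E (fun w' => phi (X w) (Y w'))).

Definition same_distr (R : realType) (Omega1 Omega2 : Type)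
    (E1 : (Omega1 -> R) -> R) (E2 : (Omega2 -> R) -> R) (p q : nat)
    (X : Omega1 -> 'M[R]_(p, q)) (Y : Omega2 -> 'M[R]_(p, q)) : Prop :=
  forall phi : 'M[R]_(p, q) -> R, bLip phi ->
    E1 (fun w => phi (X w)) = E2 (fun w => phi (Y w)).

Definition is_process (R : realType) (Omega : Type) (H : (Omega -> R) -> Prop)
    (d : nat) (M : R -> Omega -> 'rV[R]_d) : Prop :=
  forall t, 0 <= t -> forall i, H (fun w => M t w 0 i).

Definition indep_incr (R : realType) (Omega : Type) (E : (Omega -> R) -> R)
    (d : nat) (M : R -> Omega -> 'rV[R]_d) : Prop :=
  M 0 = (fun _ => 0) /\
  forall (k : nat) (t : nat -> R), 0 <= t 0%N ->
    (forall i, (i <= k)%N -> t i < t i.+1) ->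
    indep E (fun w => \matrix_(i < k.+1) M (t i) w)
            (fun w => M (t k.+1) w - M (t k) w).

Definition dominates (R : realType) (Omega : Type) (H : (Omega -> R) -> Prop)
    (E Et : (Omega -> R) -> R) : Prop :=
  forall X Y, H X -> H Y -> E X - E Y <= Et (fun w => X w - Y w).

Definition condA (R : realType) (Omega1 Omega2 : Type)
    (H1 : (Omega1 -> R) -> Prop) (E1 : (Omega1 -> R) -> R)
    (H2 : (Omega2 -> R) -> Prop) (E2 : (Omega2 -> R) -> R)
    (d : nat) (M : R -> Omega1 -> 'rV[R]_d) (N : R -> Omega2 -> 'rV[R]_d) : Prop :=
  exists (Et1 : (Omega1 -> R) -> R) (Et2 : (Omega2 -> R) -> R),
    sublinear_space H1 Et1 /\ sublinear_space H2 Et2 /\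
    dominates H1 E1 Et1 /\ dominates H2 E2 Et2 /\
    (forall s t, 0 <= s -> 0 <= t ->
       H1 (fun w => enorm (M s w - M t w)) /\ H2 (fun w => enorm (N s w - N t w))) /\
    (forall t, 0 <= t -> forall e : R, 0 < e -> exists r : R, 0 < r /\
       forall s, 0 <= s -> `|s - t| < r ->
         `|Et1 (fun w => enorm (M s w - M t w)) + Et2 (fun w => enorm (N s w - N t w))| < e).

Definition Nn (n : nat) : nat := (2 ^ n)%N.
Definition dlt (R : realType) (n : nat) : R := (2%:R ^+ n)^-1.
Definition tk (R : realType) (n k : nat) : R := k%:R * dlt R n.

Definition incr (R : realType) (Omega : Type) (d n : nat)
    (M : R -> Omega -> 'rV[R]_d) (k : nat) (w : Omega) : 'rV[R]_d :=
  M (tk R n k.+1) w - M (tk R n k) w.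

(* (M_{delta}, M_{2 delta} - M_{delta}, ..., M_{2^n delta} - M_{(2^n-1) delta})
   as a 2^n x d matrix (row k = (k+1)-th increment; row 0 = M_delta - M_0). *)
Definition Mincs (R : realType) (Omega : Type) (d n : nat)
    (M : R -> Omega -> 'rV[R]_d) (w : Omega) : 'M[R]_(Nn n, d) :=
  \matrix_(k < Nn n) incr n M k w.

Definition Xincr (R : realType) (Omega1 Omega2 : Type) (d n : nat)
    (M : R -> Omega1 -> 'rV[R]_d) (N : R -> Omega2 -> 'rV[R]_d)
    (k : nat) (w : Omega1 * Omega2) : 'rV[R]_(d + d) :=
  row_mx (incr n M k w.1) (incr n N k w.2).

Definition Xincs (R : realType) (Omega1 Omega2 : Type) (d n : nat)
    (M : R -> Omega1 -> 'rV[R]_d) (N : R -> Omega2 -> 'rV[R]_d)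
    (w : Omega1 * Omega2) : 'M[R]_(Nn n, d + d) :=
  \matrix_(k < Nn n) Xincr n M N k w.

Definition Hn (R : realType) (Omega1 Omega2 : Type) (d n : nat)
    (M : R -> Omega1 -> 'rV[R]_d) (N : R -> Omega2 -> 'rV[R]_d)
    (Y : Omega1 * Omega2 -> R) : Prop :=
  exists phi : 'M[R]_(Nn n, d + d) -> R,
    bLip phi /\ Y = (fun w => phi (Xincs n M N w)).

Definition step1 (R : realType) (Omega1 Omega2 : Type)
    (E1 : (Omega1 -> R) -> R) (E2 : (Omega2 -> R) -> R) (d n : nat)
    (M : R -> Omega1 -> 'rV[R]_d) (N : R -> Omega2 -> 'rV[R]_d)
    (k : nat) (phi : 'rV[R]_(d + d) -> R) : R :=
  let psi := fun x : 'rV[R]_d => E2 (fun w2 => phi (row_mx x (incr n N k w2))) in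
  E1 (fun w1 => psi (incr n M k w1)).

Definition set_row (R : realType) (p q : nat) (x : 'M[R]_(p, q)) (i : nat)
    (z : 'rV[R]_q) : 'M[R]_(p, q) :=
  \matrix_(a < p, b < q) (if (a : nat) == i then z 0 b else x a b).

(* Step 2, backward recursion: backward m phi = phi_{2^n - m}, seen as a function
   of the whole 2^n x 2d matrix which only depends on its first 2^n - m rows. *)
Fixpoint backward (R : realType) (Omega1 Omega2 : Type)
    (E1 : (Omega1 -> R) -> R) (E2 : (Omega2 -> R) -> R) (d n : nat)
    (M : R -> Omega1 -> 'rV[R]_d) (N : R -> Omega2 -> 'rV[R]_d)
    (m : nat) (phi : 'M[R]_(Nn n, d + d) -> R) : 'M[R]_(Nn n, d + d) -> R :=
  match m with
  | 0%N => phi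
  | m'.+1 => fun x =>
      step1 E1 E2 n M N (Nn n - m'.+1)
        (fun z => @backward R Omega1 Omega2 E1 E2 d n M N m' phi (set_row x (Nn n - m'.+1) z))
  end.

Definition En_val (R : realType) (Omega1 Omega2 : Type)
    (E1 : (Omega1 -> R) -> R) (E2 : (Omega2 -> R) -> R) (d n : nat)
    (M : R -> Omega1 -> 'rV[R]_d) (N : R -> Omega2 -> 'rV[R]_d)
    (phi : 'M[R]_(Nn n, d + d) -> R) : R :=
  @backward R Omega1 Omega2 E1 E2 d n M N (Nn n) phi 0.

(* E^n : E^n[phi(increments of X)] = phi_0 (for a chosen representation phi;
   value 0 outside H^n, where E^n is not constrained). *)
Definition En (R : realType) (Omega1 Omega2 : Type)
    (E1 : (Omega1 -> R) -> R) (E2 : (Omega2 -> R) -> R) (d n : nat)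
    (M : R -> Omega1 -> 'rV[R]_d) (N : R -> Omega2 -> 'rV[R]_d)
    (Y : Omega1 * Omega2 -> R) : R :=
  match pselect (Hn n M N Y) with
  | left h => @En_val R Omega1 Omega2 E1 E2 d n M N (proj1_sig (cid h))
  | right _ => 0
  end.

(* Main.v *)
Require Import Defs.
From HB Require Import structures.
From mathcomp Require Import all_boot all_order all_algebra.
From mathcomp Require Import boolp reals.
From mathcomp Require Import classical_sets.
From mathcomp Require Import ring lra zify.
Set Implicit Arguments. Unset Strict Implicit. Unset Printing Implicit Defensive.
Import Order.TTheory GRing.Theory Num.Theory.
Local Open Scope ring_scope.


Lemma my_le_bigmax_seq (R : realType) (I : eqType) (s : seq I) (F : I -> R) i0 :
  i0 \in s -> F i0 <= \big[Num.max/0]_(i <- s) F i.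
Proof.
elim: s => //= a s IH; rewrite inE big_cons le_max => /orP[/eqP->|/IH->].
  by rewrite lexx.
by rewrite orbT.
Qed.

Lemma my_le_bigmax (R : realType) p (F : 'I_p -> R) i0 :
  F i0 <= \big[Num.max/0]_(i < p) F i.
Proof. by apply: my_le_bigmax_seq; rewrite mem_index_enum. Qed.

Lemma my_bigmax_le (R : realType) p (F : 'I_p -> R) c :
  0 <= c -> (forall i, F i <= c) -> \big[Num.max/0]_(i < p) F i <= c.
Proof.
move=> c0 H; elim/big_ind: _ => //.
  by move=> x y hx hy; rewrite ge_max hx hy.
Qed.

Lemma my_bigmax_ge0 (R : realType) p (F : 'I_p -> R) :
  (forall i, 0 <= F i) -> 0 <= \big[Num.max/0]_(i < p) F i.
Proof.
move=> H; elim/big_ind: _ => //.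
by move=> x y hx hy; rewrite le_max hx.
Qed.


Lemma mxnorm_ge0 (R : realType) p q (x : 'M[R]_(p,q)) : 0 <= mxnorm x.
Proof. by apply: my_bigmax_ge0 => i; apply: my_bigmax_ge0. Qed.

Lemma mxnorm_entry (R : realType) p q (x : 'M[R]_(p,q)) i j : `|x i j| <= mxnorm x.
Proof.
rewrite /mxnorm.
apply: le_trans; last exact: (my_le_bigmax (fun i => \big[Num.max/0]_(j < q) `|x i j|) i).
exact: (my_le_bigmax (fun j => `|x i j|) j).
Qed.

Lemma mxnorm_le (R : realType) p q (x : 'M[R]_(p,q)) c :
  0 <= c -> (forall i j, `|x i j| <= c) -> mxnorm x <= c.
Proof. by move=> c0 H; apply: my_bigmax_le => // i; apply: my_bigmax_le. Qed.

Lemma mxnorm0 (R : realType) p q : mxnorm (0 : 'M[R]_(p,q)) = 0.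
Proof.
apply/eqP; rewrite eq_le mxnorm_ge0 andbT; apply: mxnorm_le => // i j.
by rewrite mxE normr0.
Qed.

Lemma bLipP (R : realType) p q (f : 'M[R]_(p,q) -> R) : bLip f ->
  exists C L, 0 <= C /\ 0 <= L /\ (forall x, `|f x| <= C) /\
     (forall x y, `|f x - f y| <= L * mxnorm (x - y)).
Proof.
move=> [[C hC] [L hL]]; exists `|C|, `|L|; split => //; split => //; split.
  by move=> x; apply: le_trans (hC x) (ler_norm _).
move=> x y; apply: le_trans (hL x y) _.
by apply: ler_wpM2r; [exact: mxnorm_ge0 | exact: ler_norm].
Qed.

Lemma bLip_intro (R : realType) p q (f : 'M[R]_(p,q) -> R) C L :
  (forall x, `|f x| <= C) -> (forall x y, `|f x - f y| <= L * mxnorm (x - y)) -> bLip f.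
Proof. by move=> h1 h2; split; [exists C | exists L]. Qed.

Lemma bLip_const (R : realType) p q (c : R) : bLip (fun _ : 'M[R]_(p,q) => c).
Proof. by apply: (bLip_intro (C := `|c|) (L := 0)) => // x y; rewrite subrr normr0 mul0r. Qed.

Lemma bLip_comp (R : realType) p q p' q' (f : 'M[R]_(p,q) -> R)
   (g : 'M[R]_(p',q') -> 'M[R]_(p,q)) K :
  bLip f -> (forall x y, mxnorm (g x - g y) <= K * mxnorm (x - y)) -> bLip (fun x => f (g x)).
Proof.
move=> /bLipP [C [L [C0 [L0 [hC hL]]]]] hg.
apply: (bLip_intro (C := C) (L := L * K)) => // x y.
by rewrite -mulrA; apply: le_trans (hL _ _) _; apply: ler_wpM2l.
Qed.

Lemma bLip_add (R : realType) p q (f g : 'M[R]_(p,q) -> R) :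
  bLip f -> bLip g -> bLip (fun x => f x + g x).
Proof.
move=> /bLipP [C [L [C0 [L0 [hC hL]]]]] /bLipP [C' [L' [C0' [L0' [hC' hL']]]]].
apply: (bLip_intro (C := C + C') (L := L + L')).
  by move=> x; apply: le_trans (ler_normD _ _) _; apply: lerD.
move=> x y; rewrite mulrDl.
have -> : f x + g x - (f y + g y) = (f x - f y) + (g x - g y) by ring.
by apply: le_trans (ler_normD _ _) _; apply: lerD.
Qed.

Lemma bLip_scale (R : realType) p q (c : R) (f : 'M[R]_(p,q) -> R) :
  bLip f -> bLip (fun x => c * f x).
Proof.
move=> /bLipP [C [L [C0 [L0 [hC hL]]]]].
apply: (bLip_intro (C := `|c| * C) (L := `|c| * L)).
  by move=> x; rewrite normrM; apply: ler_wpM2l.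
move=> x y; rewrite -mulrBr normrM -mulrA; apply: ler_wpM2l => //.
Qed.

Lemma bLip_opp (R : realType) p q (f : 'M[R]_(p,q) -> R) :
  bLip f -> bLip (fun x => - f x).
Proof.
move=> h; have -> : (fun x => - f x) = (fun x => -1 * f x).
  by apply: funext => x; rewrite mulN1r.
exact: bLip_scale.
Qed.

Lemma bLip_sub (R : realType) p q (f g : 'M[R]_(p,q) -> R) :
  bLip f -> bLip g -> bLip (fun x => f x - g x).
Proof. by move=> hf hg; apply: bLip_add => //; apply: bLip_opp. Qed.

Lemma bLip_norm (R : realType) p q (f : 'M[R]_(p,q) -> R) :
  bLip f -> bLip (fun x => `|f x|).
Proof.
move=> /bLipP [C [L [C0 [L0 [hC hL]]]]].
apply: (bLip_intro (C := C) (L := L)); first by move=> x; rewrite normr_id.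
by move=> x y; apply: le_trans (ler_dist_dist _ _) _.
Qed.

Lemma bLip_min (R : realType) p q (f g : 'M[R]_(p,q) -> R) :
  bLip f -> bLip g -> bLip (fun x => Num.min (f x) (g x)).
Proof.
move=> hf hg.
have -> : (fun x => Num.min (f x) (g x)) =
   (fun x => (1/2) * ((f x + g x) - `|f x - g x|)).
  apply: funext => x; case: (leP (f x) (g x)) => h.
    rewrite (ler0_norm _); last by rewrite subr_le0.
    by field.
  by rewrite (gtr0_norm _) ?subr_gt0 //; field.
apply: bLip_scale; apply: bLip_sub; first exact: bLip_add.
by apply: bLip_norm; apply: bLip_sub.
Qed.


Lemma mxnorm_row_mx (R : realType) p q1 q2 (a a' : 'M[R]_(p,q1)) (b b' : 'M[R]_(p,q2)) :
  mxnorm (row_mx a b - row_mx a' b') <= mxnorm (a - a') + mxnorm (b - b').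
Proof.
apply: mxnorm_le; first by rewrite addr_ge0 ?mxnorm_ge0.
move=> i j; rewrite !mxE; case: (split j) => k.
  have := mxnorm_entry (a - a') i k; rewrite !mxE => h.
  by apply: le_trans h _; rewrite lerDl mxnorm_ge0.
have := mxnorm_entry (b - b') i k; rewrite !mxE => h.
by apply: le_trans h _; rewrite lerDr mxnorm_ge0.
Qed.

Lemma set_rowE (R : realType) p q (x : 'M[R]_(p,q)) i z a b :
  set_row x i z a b = if (a : nat) == i then z 0 b else x a b.
Proof. by rewrite /set_row mxE. Qed.

Lemma mxnorm_set_row (R : realType) p q (x x' : 'M[R]_(p,q)) k (z z' : 'rV[R]_q) :
  mxnorm (set_row x k z - set_row x' k z') <= mxnorm (x - x') + mxnorm (z - z').
Proof.
apply: mxnorm_le; first by rewrite addr_ge0 ?mxnorm_ge0.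
move=> i j; rewrite !mxE; case: eqP => _.
  have := mxnorm_entry (z - z') 0 j; rewrite !mxE => h.
  by apply: le_trans h _; rewrite lerDr mxnorm_ge0.
have := mxnorm_entry (x - x') i j; rewrite !mxE => h.
by apply: le_trans h _; rewrite lerDl mxnorm_ge0.
Qed.

Lemma mxnorm_sub0 (R : realType) p q (x : 'M[R]_(p,q)) : mxnorm (x - x) = 0.
Proof. by rewrite subrr mxnorm0. Qed.

Definition goodT (R : realType) (q : nat) (T : ('rV[R]_q -> R) -> R) : Prop :=
  [/\ (forall f g, bLip f -> bLip g -> (forall z, f z <= g z) -> T f <= T g),
      (forall c, T (fun _ => c) = c),
      (forall f g, bLip f -> bLip g -> T (fun z => f z + g z) <= T f + T g) &
      (forall c f, 0 <= c -> bLip f -> T (fun z => c * f z) = c * T f)].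

Lemma goodTL (R : realType) q (T : ('rV[R]_q -> R) -> R) f g (c : R) :
  goodT T -> bLip f -> bLip g -> (forall z, `|f z - g z| <= c) -> `|T f - T g| <= c.
Proof.
move=> [hm hc hs hh] hf hg hfg.
have key : forall f g, bLip f -> bLip g -> (forall z, f z <= g z + c) -> T f <= T g + c.
  move=> f1 g1 hf1 hg1 h.
  apply: le_trans (hm _ (fun z => g1 z + c) hf1 _ h) _.
    by apply: bLip_add => //; apply: bLip_const.
  by apply: le_trans (hs _ _ hg1 (bLip_const _ _ c)) _; rewrite hc.
rewrite ler_distl; apply/andP; split.
  rewrite lerBlDr; apply: key => // z; move: (hfg z); rewrite ler_distl => /andP[h1 h2].
  by rewrite -lerBlDr.
by apply: key => // z; move: (hfg z); rewrite ler_distl => /andP[_ ->].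
Qed.

Lemma goodTB (R : realType) q (T : ('rV[R]_q -> R) -> R) f (C : R) :
  goodT T -> bLip f -> (forall z, `|f z| <= C) -> `|T f| <= C.
Proof.
move=> hT hf hC; have := goodTL (g := fun _ => 0) hT hf (bLip_const _ _ 0) (c := C).
case: hT => _ hc _ _; rewrite hc subr0; apply => z; by rewrite subr0.
Qed.

Lemma bLip_T (R : realType) p r q (T : ('rV[R]_q -> R) -> R)
   (F : 'M[R]_(p,r) -> 'rV[R]_q -> R) (C L : R) :
  goodT T -> (forall x, bLip (F x)) -> (forall x z, `|F x z| <= C) ->
  (forall x y z, `|F x z - F y z| <= L * mxnorm (x - y)) ->
  bLip (fun x => T (F x)).
Proof.
move=> hT hF hC hL; apply: (bLip_intro (C := C) (L := L)).
  by move=> x; apply: goodTB.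
by move=> x y; apply: goodTL.
Qed.


Lemma sl_H_const (R : realType) (Omega : Type) (H : (Omega -> R) -> Prop) E (c : R) :
  sublinear_space H E -> H (fun _ => c).
Proof.
move=> hS; have := sl_comp hS (X := fun _ : Omega => (0 : 'rV[R]_0)) (phi := fun _ => c).
by apply => //; [case | apply: bLip_const].
Qed.

Lemma goodE (R : realType) (Omega : Type) (H : (Omega -> R) -> Prop) E q
   (Z : Omega -> 'rV[R]_q) :
  sublinear_space H E -> (forall i, H (fun w => Z w 0 i)) ->
  goodT (fun f => E (fun w => f (Z w))).
Proof.
move=> hS hZ.
have hH : forall f, bLip f -> H (fun w => f (Z w)) by move=> f hf; exact: (sl_comp hS hZ hf).
split.
- by move=> f g hf hg hfg; apply: (sl_mono hS); [exact: hH | exact: hH | move=> w; exact: hfg].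
- by move=> c; apply: (sl_const hS).
- by move=> f g hf hg; apply: (sl_subadd hS); apply: hH.
- by move=> c f c0 hf; apply: (sl_homog hS) => //; apply: hH.
Qed.

Lemma bLip_row_mxr (R : realType) q1 q2 (f : 'rV[R]_(q1 + q2) -> R) (x : 'rV[R]_q1) :
  bLip f -> bLip (fun z : 'rV[R]_q2 => f (row_mx x z)).
Proof.
move=> hf; apply: (bLip_comp (K := 1)) => // z z'.
by rewrite mul1r; apply: le_trans (mxnorm_row_mx _ _ _ _) _; rewrite mxnorm_sub0 add0r.
Qed.

Lemma good_comp (R : realType) q1 q2 (T1 : ('rV[R]_q1 -> R) -> R) (T2 : ('rV[R]_q2 -> R) -> R) :
  goodT T1 -> goodT T2 ->
  goodT (fun f : 'rV[R]_(q1 + q2) -> R => T1 (fun x => T2 (fun z => f (row_mx x z)))).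
Proof.
move=> hT1 hT2.
have inner : forall f : 'rV[R]_(q1 + q2) -> R, bLip f -> bLip (fun x => T2 (fun z => f (row_mx x z))).
  move=> f hf; have [C [L [C0 [L0 [hC hL]]]]] := bLipP hf.
  apply: (bLip_T (C := C) (L := L)) => //.
  - by move=> x; apply: bLip_row_mxr.
  - move=> x y z; apply: le_trans (hL _ _) _; apply: ler_wpM2l => //.
    by apply: le_trans (mxnorm_row_mx _ _ _ _) _; rewrite mxnorm_sub0 addr0.
have [m1 c1 s1 h1] := hT1; have [m2 c2 s2 h2] := hT2.
split.
- move=> f g hf hg hfg; apply: m1; try exact: inner.
  by move=> x; apply: m2 => //; apply: bLip_row_mxr.
- by move=> c; rewrite (_ : (fun x => T2 (fun _ => c)) = fun _ => c) ?c1 //; apply: funext => x; rewrite c2.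
- move=> f g hf hg /=.
  apply: le_trans; last exact: (s1 _ _ (inner f hf) (inner g hg)).
  apply: m1; [exact: (inner (fun v => f v + g v) (bLip_add hf hg)) | by apply: bLip_add; apply: inner|].
  by move=> x; apply: s2; apply: bLip_row_mxr.
- move=> c f c0 hf /=.
  rewrite -h1 //; last exact: inner.
  congr T1; apply: funext => x; rewrite h2 //; exact: bLip_row_mxr.
Qed.


Fixpoint Bgen (R : realType) (q P : nat) (T : nat -> ('rV[R]_q -> R) -> R)
   (m : nat) (f : 'M[R]_(P, q) -> R) : 'M[R]_(P, q) -> R :=
  match m with
  | 0%N => f
  | m'.+1 => fun x => T (P - m'.+1)%N (fun z => Bgen T m' f (set_row x (P - m'.+1) z))
  end.

Lemma B_bLip (R : realType) q P (T : nat -> ('rV[R]_q -> R) -> R) m (f : 'M[R]_(P, q) -> R) :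
  (forall k, goodT (T k)) -> bLip f -> bLip (Bgen T m f).
Proof.
move=> hT hf; elim: m => [|m IH] //=.
have [C [L [C0 [L0 [hC hL]]]]] := bLipP IH.
apply: (bLip_T (C := C) (L := L)) => //.
- move=> x; apply: (bLip_comp (K := 1)) => // z z'.
  by rewrite mul1r; apply: le_trans (mxnorm_set_row _ _ _ _ _) _; rewrite mxnorm_sub0 add0r.
- move=> x y z; apply: le_trans (hL _ _) _; apply: ler_wpM2l => //.
  by apply: le_trans (mxnorm_set_row _ _ _ _ _) _; rewrite mxnorm_sub0 addr0.
Qed.

Lemma bLip_set_row (R : realType) q P (g : 'M[R]_(P, q) -> R) x k :
  bLip g -> bLip (fun z => g (set_row x k z)).
Proof.
move=> hg; apply: (bLip_comp (K := 1)) => // z z'.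
by rewrite mul1r; apply: le_trans (mxnorm_set_row _ _ _ _ _) _; rewrite mxnorm_sub0 add0r.
Qed.

Lemma B_mono (R : realType) q P (T : nat -> ('rV[R]_q -> R) -> R) m (f g : 'M[R]_(P, q) -> R) :
  (forall k, goodT (T k)) -> bLip f -> bLip g -> (forall x, f x <= g x) ->
  forall x, Bgen T m f x <= Bgen T m g x.
Proof.
move=> hT hf hg hfg; elim: m => [|m IH] //= x.
have [hm _ _ _] := hT (P - m.+1)%N.
by apply: hm => //; apply: bLip_set_row; apply: B_bLip.
Qed.

Lemma B_const (R : realType) q P (T : nat -> ('rV[R]_q -> R) -> R) m (c : R) :
  (forall k, goodT (T k)) -> forall x, Bgen T m (fun _ : 'M[R]_(P, q) => c) x = c.
Proof.
move=> hT; elim: m => [|m IH] //= x.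
have [_ hc _ _] := hT (P - m.+1)%N.
by rewrite (_ : (fun z => _) = fun _ => c) ?hc //; apply: funext => z; rewrite IH.
Qed.

Lemma B_subadd (R : realType) q P (T : nat -> ('rV[R]_q -> R) -> R) m (f g : 'M[R]_(P, q) -> R) :
  (forall k, goodT (T k)) -> bLip f -> bLip g ->
  forall x, Bgen T m (fun y => f y + g y) x <= Bgen T m f x + Bgen T m g x.
Proof.
move=> hT hf hg; elim: m => [|m IH] //= x.
have [hm _ hs _] := hT (P - m.+1)%N.
apply: le_trans; last by apply: hs; apply: bLip_set_row; apply: B_bLip.
apply: hm => //.
- apply: bLip_set_row; apply: B_bLip => //; exact: bLip_add.
- by apply: (bLip_add (f := fun z => Bgen T m f (set_row x (P - m.+1) z)));
    apply: bLip_set_row; apply: B_bLip.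
Qed.

Lemma B_homog (R : realType) q P (T : nat -> ('rV[R]_q -> R) -> R) m (c : R) (f : 'M[R]_(P, q) -> R) :
  (forall k, goodT (T k)) -> 0 <= c -> bLip f ->
  forall x, Bgen T m (fun y => c * f y) x = c * Bgen T m f x.
Proof.
move=> hT c0 hf; elim: m => [|m IH] //= x.
have [_ _ _ hh] := hT (P - m.+1)%N.
rewrite -hh //; last by apply: bLip_set_row; apply: B_bLip.
by congr (T _); apply: funext => z; rewrite IH.
Qed.

Lemma B_local (R : realType) q P (T : nat -> ('rV[R]_q -> R) -> R) m (f : 'M[R]_(P, q) -> R) (x x' : 'M[R]_(P, q)) :
  (forall (i : 'I_P) j, (i < P - m)%N -> x i j = x' i j) -> Bgen T m f x = Bgen T m f x'.
Proof.
elim: m x x' => [|m IH] x x' hx /=.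
  congr f; apply/matrixP => i j; apply: hx; rewrite subn0; exact: ltn_ord.
congr (T _); apply: funext => z; apply: IH => i j hi.
rewrite !set_rowE; case: eqP => // /eqP hne; apply: hx.
lia.
Qed.

Lemma B_L1 (R : realType) q P (T : nat -> ('rV[R]_q -> R) -> R) (m r : nat) (f : 'M[R]_(P, q) -> R) :
  (forall k, goodT (T k)) ->
  (forall x x' : 'M[R]_(P, q), (forall (i : 'I_P) j, (i < r)%N -> x i j = x' i j) -> f x = f x') ->
  (m <= P - r)%N -> Bgen T m f = f.
Proof.
move=> hT hf; elim: m => [|m IH] hm //=; apply: funext => x.
rewrite IH; last by lia.
have [_ hc _ _] := hT (P - m.+1)%N.
rewrite (_ : (fun z => _) = fun _ => f x) ?hc //; apply: funext => z; apply: hf => i j hi.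
rewrite set_rowE; case: eqP => // hik; lia.
Qed.

Lemma B_prop (R : realType) q P (T : nat -> ('rV[R]_q -> R) -> R) m j (f g : 'M[R]_(P, q) -> R) :
  Bgen T m f = Bgen T m g -> Bgen T (j + m) f = Bgen T (j + m) g.
Proof.
move=> h; elim: j => [|j IH] //=.
by apply: funext => x; rewrite IH.
Qed.


Lemma tk_ge0 (R : realType) n k : 0 <= tk R n k.
Proof. by rewrite /tk /dlt mulr_ge0 // invr_ge0 exprn_ge0. Qed.

Lemma tk_lt (R : realType) n k : tk R n k < tk R n k.+1.
Proof.
rewrite /tk /dlt ltr_pM2r ?invr_gt0 ?exprn_gt0 //.
by rewrite ltr_nat.
Qed.

Lemma incr_H (R : realType) (Omega : Type) (H : (Omega -> R) -> Prop) E d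
   (M : R -> Omega -> 'rV[R]_d) n k i :
  sublinear_space H E -> is_process H M -> H (fun w => incr n M k w 0 i).
Proof.
move=> hS hP.
have -> : (fun w => incr n M k w 0 i) =
          (fun w => M (tk R n k.+1) w 0 i + (-1) * M (tk R n k) w 0 i).
  by apply: funext => w; rewrite /incr !mxE mulN1r.
apply: (sl_add hS); first exact: hP (tk_ge0 _ _ _) i.
by apply: (sl_scale hS); exact: hP (tk_ge0 _ _ _) i.
Qed.

Lemma good_incr (R : realType) (Omega : Type) (H : (Omega -> R) -> Prop) E d
   (M : R -> Omega -> 'rV[R]_d) n k :
  sublinear_space H E -> is_process H M ->
  goodT (fun f => E (fun w => f (incr n M k w))).
Proof. move=> hS hP; apply: (goodE hS (Z := incr n M k)) => i; exact: (incr_H n k i hS hP). Qed.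

Lemma MincsE (R : realType) (Omega : Type) d n (M : R -> Omega -> 'rV[R]_d) w i j :
  Mincs n M w i j = incr n M i w 0 j.
Proof. by rewrite /Mincs mxE. Qed.

Definition Lm (R : realType) d P k (X : 'M[R]_(k.+1, d)) : 'M[R]_(P, d) :=
  \matrix_(i < P, j < d) (X (inord i.+1) j - X (inord i) j).

Lemma mxnorm_Lm (R : realType) d P k (X X' : 'M[R]_(k.+1, d)) :
  mxnorm (Lm P X - Lm P X') <= 2 * mxnorm (X - X').
Proof.
apply: mxnorm_le; first by rewrite mulr_ge0 ?mxnorm_ge0.
move=> i j; rewrite !mxE.
have h1 := mxnorm_entry (X - X') (inord i.+1) j.
have h2 := mxnorm_entry (X - X') (inord i) j.
rewrite !mxE in h1 h2.
have -> : X (inord i.+1) j - X (inord i) j - (X' (inord i.+1) j - X' (inord i) j)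
   = (X (inord i.+1) j - X' (inord i.+1) j) - (X (inord i) j - X' (inord i) j) by ring.
apply: le_trans (ler_normB _ _) _.
by rewrite mulr2n mulrDl mul1r; apply: lerD.
Qed.

Lemma collapse_step (R : realType) (Omega : Type) (H : (Omega -> R) -> Prop) E d
   (M : R -> Omega -> 'rV[R]_d) n (g : 'M[R]_(Nn n, d) -> R) k :
  sublinear_space H E -> is_process H M -> indep_incr E M -> bLip g ->
  (forall x x' : 'M[R]_(Nn n, d), (forall (i : 'I_(Nn n)) j, (i < k.+1)%N -> x i j = x' i j) -> g x = g x') ->
  E (fun w => g (Mincs n M w)) =
  E (fun w => E (fun w' => g (set_row (Mincs n M w) k (incr n M k w')))).
Proof.
move=> hS hP [hM0 hind] hg hloc.
have := hind k (fun i => tk R n i) (tk_ge0 _ _ _) (fun i _ => tk_lt _ _ _).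
set Xw := fun w => \matrix_(i < k.+1) M (tk R n i) w.
have [C [L [C0 [L0 [hC hL]]]]] := bLipP hg.
move/(_ (fun X Y => g (set_row (Lm (Nn n) X) k Y))).
have key : forall w Y, g (set_row (Lm (Nn n) (Xw w)) k Y) = g (set_row (Mincs n M w) k Y).
  move=> w Y; apply: hloc => i j hi; rewrite !set_rowE; case: eqP => // hik.
  rewrite MincsE /Xw !mxE !inordK //; lia.
have key2 : forall w, g (Mincs n M w) = g (set_row (Mincs n M w) k (incr n M k w)).
  move=> w; apply: hloc => i j hi; rewrite !set_rowE; case: eqP => // hik.
  by rewrite MincsE hik.
have hb2 : bLip2 (fun (X : 'M[R]_(k.+1, d)) (Y : 'rV[R]_d) => g (set_row (Lm (Nn n) X) k Y)).
  split; first by exists C => x y; apply: hC.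
  exists (2 * L) => x x' y y'.
  apply: le_trans (hL _ _) _.
  rewrite [2 * L]mulrC -mulrA; apply: ler_wpM2l => //.
  apply: le_trans (mxnorm_set_row _ _ _ _ _) _.
  rewrite mulrDr; apply: lerD; first exact: mxnorm_Lm.
  by rewrite mulr2n mulrDl mul1r lerDl mxnorm_ge0.
move=> /(_ hb2) h.
have e1 : (fun w => g (set_row (Lm (Nn n) (Xw w)) k (M (tk R n k.+1) w - M (tk R n k) w)))
   = (fun w => g (Mincs n M w)) by apply: funext => w; rewrite key key2.
have e2 : (fun w => E (fun w' => g (set_row (Lm (Nn n) (Xw w)) k (M (tk R n k.+1) w' - M (tk R n k) w'))))
   = (fun w => E (fun w' => g (set_row (Mincs n M w) k (incr n M k w')))).
  by apply: funext => w; congr E; apply: funext => w'; rewrite key.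
by rewrite -e1 -e2.
Qed.

Lemma collapse (R : realType) (Omega : Type) (H : (Omega -> R) -> Prop) E d
   (M : R -> Omega -> 'rV[R]_d) n (h : 'M[R]_(Nn n, d) -> R) a :
  sublinear_space H E -> is_process H M -> indep_incr E M -> bLip h ->
  Bgen (fun k f => E (fun w => f (incr n M k w))) (Nn n) h a = E (fun w => h (Mincs n M w)).
Proof.
move=> hS hP hI hh.
have hT : forall k, goodT (fun f => E (fun w => f (incr n M k w))).
  by move=> k; exact: (good_incr n k hS hP).
have step : forall m, (m <= Nn n)%N -> E (fun w => h (Mincs n M w)) =
   E (fun w => Bgen (fun k f => E (fun w => f (incr n M k w))) m h (Mincs n M w)).
  move=> m0; elim: m0 => [|m IH] hm //.
  rewrite IH; last by lia.
  rewrite (collapse_step (k := (Nn n - m.+1)%N) hS hP hI) //.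
    exact: B_bLip.
  move=> x x' hx; apply: B_local => i j hi; apply: hx; lia.
rewrite (step (Nn n)) // (_ : (fun w => _) = fun _ => Bgen (fun k f => E (fun w => f (incr n M k w))) (Nn n) h a).
  by rewrite (sl_const hS).
by apply: funext => w; apply: B_local => i j; rewrite subnn.
Qed.


Lemma good_step1 (R : realType) (Omega1 Omega2 : Type)
    (H1 : (Omega1 -> R) -> Prop) (E1 : (Omega1 -> R) -> R)
    (H2 : (Omega2 -> R) -> Prop) (E2 : (Omega2 -> R) -> R)
    (d : nat) (M : R -> Omega1 -> 'rV[R]_d) (N : R -> Omega2 -> 'rV[R]_d) n k :
  sublinear_space H1 E1 -> sublinear_space H2 E2 ->
  is_process H1 M -> is_process H2 N ->
  goodT (step1 E1 E2 n M N k).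
Proof.
move=> hS1 hS2 hP1 hP2.
exact: (good_comp (good_incr n k hS1 hP1) (good_incr n k hS2 hP2)).
Qed.

Lemma backwardE (R : realType) (Omega1 Omega2 : Type)
    (E1 : (Omega1 -> R) -> R) (E2 : (Omega2 -> R) -> R)
    (d : nat) (M : R -> Omega1 -> 'rV[R]_d) (N : R -> Omega2 -> 'rV[R]_d) n m (phi : 'M[R]_(Nn n, d + d) -> R) :
  @backward R Omega1 Omega2 E1 E2 d n M N m phi = Bgen (fun k => step1 E1 E2 n M N k) m phi.
Proof. by elim: m => [|m IH] //=; apply: funext => x; rewrite IH. Qed.

Lemma lsub_set_row (R : realType) p q1 q2 (x : 'M[R]_(p, q1 + q2)) k u v :
  lsubmx (set_row x k (row_mx u v)) = set_row (lsubmx x) k u.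
Proof.
apply/matrixP => i j; rewrite !mxE; case: eqP => // _.
by rewrite (unsplitK (inl j) : split (lshift q2 j) = inl j).
Qed.

Lemma rsub_set_row (R : realType) p q1 q2 (x : 'M[R]_(p, q1 + q2)) k u v :
  rsubmx (set_row x k (row_mx u v)) = set_row (rsubmx x) k v.
Proof.
apply/matrixP => i j; rewrite !mxE; case: eqP => // _.
by rewrite (unsplitK (inr j) : split (rshift q1 j) = inr j).
Qed.

Lemma relM (R : realType) (Omega1 Omega2 : Type)
    (H2 : (Omega2 -> R) -> Prop) (E1 : (Omega1 -> R) -> R) (E2 : (Omega2 -> R) -> R)
    (d : nat) (M : R -> Omega1 -> 'rV[R]_d) (N : R -> Omega2 -> 'rV[R]_d) n m
    (h : 'M[R]_(Nn n, d) -> R) x :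
  sublinear_space H2 E2 ->
  Bgen (fun k => step1 E1 E2 n M N k) m (fun y => h (lsubmx y)) x =
  Bgen (fun k f => E1 (fun w => f (incr n M k w))) m h (lsubmx x).
Proof.
move=> hS2; elim: m x => [|m IH] x //=.
rewrite /step1 /=; congr E1; apply: funext => w1.
under eq_fun do rewrite IH lsub_set_row.
by rewrite (sl_const hS2).
Qed.

Lemma relN (R : realType) (Omega1 Omega2 : Type)
    (H1 : (Omega1 -> R) -> Prop) (E1 : (Omega1 -> R) -> R) (E2 : (Omega2 -> R) -> R)
    (d : nat) (M : R -> Omega1 -> 'rV[R]_d) (N : R -> Omega2 -> 'rV[R]_d) n m
    (h : 'M[R]_(Nn n, d) -> R) x :
  sublinear_space H1 E1 ->
  Bgen (fun k => step1 E1 E2 n M N k) m (fun y => h (rsubmx y)) x =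
  Bgen (fun k f => E2 (fun w => f (incr n N k w))) m h (rsubmx x).
Proof.
move=> hS1; elim: m x => [|m IH] x //=.
rewrite /step1 /=.
under eq_fun do under eq_fun do rewrite IH rsub_set_row.
by rewrite (sl_const hS1).
Qed.

Lemma Xincs_row (R : realType) (Omega1 Omega2 : Type)
    (d : nat) (M : R -> Omega1 -> 'rV[R]_d) (N : R -> Omega2 -> 'rV[R]_d) n w :
  Xincs n M N w = row_mx (Mincs n M w.1) (Mincs n N w.2).
Proof.
apply/matrixP => i j; rewrite /Xincs /Xincr !mxE; case: split => k; by rewrite !mxE.
Qed.

Local Open Scope classical_set_scope.

Lemma mxnorm_tri (R : realType) p q (a b c : 'M[R]_(p, q)) :
  mxnorm (a - c) <= mxnorm (a - b) + mxnorm (b - c).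
Proof.
apply: mxnorm_le; first by rewrite addr_ge0 ?mxnorm_ge0.
move=> i j; have h1 := mxnorm_entry (a - b) i j; have h2 := mxnorm_entry (b - c) i j.
rewrite !mxE in h1 h2 *.
have -> : a i j - c i j = (a i j - b i j) + (b i j - c i j) by ring.
by apply: le_trans (ler_normD _ _) _; apply: lerD.
Qed.

Lemma mxnorm_lsub (R : realType) p q1 q2 (x y : 'M[R]_(p, q1 + q2)) :
  mxnorm (lsubmx x - lsubmx y) <= mxnorm (x - y).
Proof.
apply: mxnorm_le; first exact: mxnorm_ge0.
move=> i j; have := mxnorm_entry (x - y) i (lshift q2 j); by rewrite !mxE.
Qed.

Lemma mxnorm_rsub (R : realType) p q1 q2 (x y : 'M[R]_(p, q1 + q2)) :
  mxnorm (rsubmx x - rsubmx y) <= mxnorm (x - y).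
Proof.
apply: mxnorm_le; first exact: mxnorm_ge0.
move=> i j; have := mxnorm_entry (x - y) i (rshift q1 j); by rewrite !mxE.
Qed.

Lemma sl_inhabited (R : realType) (Omega : Type) (H : (Omega -> R) -> Prop) E :
  sublinear_space H E -> exists w : Omega, True.
Proof.
move=> hS; apply: contrapT => hne.
have e : (fun _ : Omega => (0 : R)) = (fun _ => 1).
  by apply: funext => w; exfalso; apply: hne; exists w.
have := sl_const hS 0; rewrite e (sl_const hS 1) => /eqP; by rewrite oner_eq0.
Qed.

Definition dset (R : realType) (Omega : Type) d n (M : R -> Omega -> 'rV[R]_d)
   (a : 'M[R]_(Nn n, d)) : set R :=
  [set mxnorm (a - Mincs n M w) | w in [set: Omega]].

Definition dfun (R : realType) (Omega : Type) d n (M : R -> Omega -> 'rV[R]_d)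
   (a : 'M[R]_(Nn n, d)) : R := Num.min (inf (dset M a)) 1.

Lemma dset_inf (R : realType) (Omega : Type) d n (M : R -> Omega -> 'rV[R]_d) (a : 'M[R]_(Nn n, d)) :
  (exists w : Omega, True) -> has_inf (dset M a).
Proof.
move=> [w _]; split; first by exists (mxnorm (a - Mincs n M w)); exists w.
by exists 0 => s [w' _ <-]; exact: mxnorm_ge0.
Qed.

Lemma inf_dset_ge0 (R : realType) (Omega : Type) d n (M : R -> Omega -> 'rV[R]_d) (a : 'M[R]_(Nn n, d)) :
  (exists w : Omega, True) -> 0 <= inf (dset M a).
Proof.
move=> hw; have [hne _] := dset_inf M a hw.
by apply: lb_le_inf => // s [w' _ <-]; exact: mxnorm_ge0.
Qed.

Lemma inf_dset_lip (R : realType) (Omega : Type) d n (M : R -> Omega -> 'rV[R]_d) (a b : 'M[R]_(Nn n, d)) :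
  (exists w : Omega, True) -> inf (dset M a) <= inf (dset M b) + mxnorm (a - b).
Proof.
move=> hw; have [_ hlb] := dset_inf M a hw; have [hne _] := dset_inf M b hw.
rewrite -lerBlDr; apply: lb_le_inf => // s [w _ <-].
rewrite lerBlDr; apply: le_trans; last exact: (lerD (lexx _) (lexx _)).
have := ge_inf hlb; move/(_ (mxnorm (a - Mincs n M w))) => h.
apply: le_trans (h _) _; first by exists w.
by rewrite [X in _ <= X]addrC; exact: (mxnorm_tri a b (Mincs n M w)).
Qed.

Lemma min1_lip (R : realType) (u v : R) : `|Num.min u 1 - Num.min v 1| <= `|u - v|.
Proof.
case: (leP u 1) => hu; case: (leP v 1) => hv.
- by [].
- by rewrite !ler0_norm ?subr_le0 //; lra.
- by rewrite !ger0_norm ?subr_ge0 //; lra.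
- by rewrite subrr normr0 normr_ge0.
Qed.


Lemma dfun_ge0 (R : realType) (Omega : Type) d n (M : R -> Omega -> 'rV[R]_d) (a : 'M[R]_(Nn n, d)) :
  (exists w : Omega, True) -> 0 <= dfun M a.
Proof. move=> hw; rewrite /dfun le_min; apply/andP; split; [exact: inf_dset_ge0 | exact: ler01]. Qed.

Lemma dfun_le1 (R : realType) (Omega : Type) d n (M : R -> Omega -> 'rV[R]_d) (a : 'M[R]_(Nn n, d)) :
  dfun M a <= 1.
Proof. by rewrite /dfun ge_min lexx orbT. Qed.

Lemma dfun_Mincs (R : realType) (Omega : Type) d n (M : R -> Omega -> 'rV[R]_d) w :
  dfun M (Mincs n M w) = 0.
Proof.
have hw : exists w : Omega, True by exists w.
have [_ hlb] := dset_inf M (Mincs n M w) hw.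
have h0 : inf (dset M (Mincs n M w)) <= 0.
  by apply: (ge_inf hlb); exists w => //; rewrite subrr mxnorm0.
have : inf (dset M (Mincs n M w)) = 0.
  by apply/eqP; rewrite eq_le h0 inf_dset_ge0.
by rewrite /dfun => ->; rewrite /Num.min ltr01.
Qed.

Lemma mxnorm_sym (R : realType) p q (a b : 'M[R]_(p, q)) : mxnorm (b - a) = mxnorm (a - b).
Proof.
by rewrite /mxnorm; apply: eq_bigr => i _; apply: eq_bigr => j _; rewrite !mxE distrC.
Qed.

Lemma dfun_bLip (R : realType) (Omega : Type) d n (M : R -> Omega -> 'rV[R]_d) :
  (exists w : Omega, True) -> bLip (fun a : 'M[R]_(Nn n, d) => dfun M a).
Proof.
move=> hw; apply: (bLip_intro (C := 1) (L := 1)).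
  by move=> a; rewrite ger0_norm ?dfun_ge0 ?dfun_le1.
move=> a b; rewrite mul1r; apply: le_trans (min1_lip _ _) _.
rewrite ler_distl; apply/andP; split; last exact: inf_dset_lip.
rewrite lerBlDr -(mxnorm_sym a b); exact: inf_dset_lip.
Qed.


Lemma small_eps (R : realType) (A e : R) : 0 <= A -> 0 < e ->
  A * (2 * (e / (2 * (A + 1)))) <= e.
Proof.
move=> A0 e0.
have hA : 0 < A + 1 by lra.
have -> : A * (2 * (e / (2 * (A + 1)))) = (e * A) / (A + 1).
  by field; rewrite gt_eqF.
rewrite ler_pdivrMr // mulrDr mulr1; lra.
Qed.

Lemma WD (R : realType) (Omega1 Omega2 : Type)
    (H1 : (Omega1 -> R) -> Prop) (E1 : (Omega1 -> R) -> R)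
    (H2 : (Omega2 -> R) -> Prop) (E2 : (Omega2 -> R) -> R)
    (d : nat) (M : R -> Omega1 -> 'rV[R]_d) (N : R -> Omega2 -> 'rV[R]_d) n
    (phi psi : 'M[R]_(Nn n, d + d) -> R) :
  sublinear_space H1 E1 -> sublinear_space H2 E2 ->
  is_process H1 M -> is_process H2 N ->
  indep_incr E1 M -> indep_incr E2 N ->
  bLip phi -> bLip psi -> (forall w, phi (Xincs n M N w) = psi (Xincs n M N w)) ->
  Bgen (fun k => step1 E1 E2 n M N k) (Nn n) phi 0 <=
  Bgen (fun k => step1 E1 E2 n M N k) (Nn n) psi 0.
Proof.
move=> hS1 hS2 hP1 hP2 hI1 hI2 hphi hpsi heq.
have hT : forall k, goodT (step1 E1 E2 n M N k) by move=> k; exact: (good_step1 n k hS1 hS2 hP1 hP2).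
have hw1 := sl_inhabited hS1; have hw2 := sl_inhabited hS2.
have [C1 [L1 [C10 [L10 [hC1 hL1]]]]] := bLipP hphi.
have [C2 [L2 [C20 [L20 [hC2 hL2]]]]] := bLipP hpsi.
set K := C1 + C2 + (L1 + L2).
have K0 : 0 <= K by rewrite /K; lra.
set G := fun x : 'M[R]_(Nn n, d + d) => dfun M (lsubmx x) + dfun N (rsubmx x).
have bGM : bLip (fun x : 'M[R]_(Nn n, d + d) => dfun M (lsubmx x)).
  apply: (bLip_comp (K := 1)); first exact: dfun_bLip.
  by move=> x y; rewrite mul1r; exact: mxnorm_lsub.
have bGN : bLip (fun x : 'M[R]_(Nn n, d + d) => dfun N (rsubmx x)).
  apply: (bLip_comp (K := 1)); first exact: dfun_bLip.
  by move=> x y; rewrite mul1r; exact: mxnorm_rsub.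
have bG : bLip G by apply: bLip_add.
have bF : bLip (fun x => `|phi x - psi x|) by apply: bLip_norm; apply: bLip_sub.
have hFC : forall x, `|phi x - psi x| <= C1 + C2.
  by move=> x; apply: le_trans (ler_normB _ _) _; apply: lerD.
have bound : forall x, `|phi x - psi x| <= K * G x.
  move=> x; set a := lsubmx x; set b := rsubmx x.
  have hu := inf_dset_ge0 M a hw1; have hv := inf_dset_ge0 N b hw2.
  have ha0 := dfun_ge0 M a hw1; have hb0 := dfun_ge0 N b hw2.
  have bigcase : 1 <= G x -> `|phi x - psi x| <= K * G x.
    move=> hG; apply: le_trans (hFC x) _.
    apply: le_trans (_ : K <= K * G x); last first.
      by rewrite -{1}[K]mulr1; apply: ler_wpM2l.
    by rewrite /K lerDl; lra.
  case: (leP 1 (inf (dset M a))) => ha.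
    apply: bigcase; rewrite /G -/a -/b /dfun.
    by rewrite (_ : Num.min (inf (dset M a)) 1 = 1) ?lerDl ?dfun_ge0 // /Num.min ltNge ha.
  case: (leP 1 (inf (dset N b))) => hb.
    apply: bigcase; rewrite /G -/a -/b /dfun.
    by rewrite (_ : Num.min (inf (dset N b)) 1 = 1) ?lerDr ?dfun_ge0 // /Num.min ltNge hb.
  have eG : G x = inf (dset M a) + inf (dset N b).
    by rewrite /G -/a -/b /dfun /Num.min ha hb.
  rewrite eG.
  apply: le_trans (_ : (L1 + L2) * (inf (dset M a) + inf (dset N b)) <= _); last first.
    by apply: ler_wpM2r; [lra | rewrite /K lerDr; lra].
  apply/ler_addgt0Pr => e e0.
  set eps := e / (2 * (L1 + L2 + 1)).
  have eps0 : 0 < eps by rewrite /eps divr_gt0 //; lra.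
  have [s [w1 _ <-] hs1] := inf_adherent eps0 (dset_inf M a hw1).
  have [s2 [w2 _ <-] hs2] := inf_adherent eps0 (dset_inf N b hw2).
  have hxy : mxnorm (x - Xincs n M N (w1, w2)) <=
       mxnorm (a - Mincs n M w1) + mxnorm (b - Mincs n N w2).
    by rewrite Xincs_row /= -{1}(hsubmxK x); exact: mxnorm_row_mx.
  have hF : `|phi x - psi x| <= (L1 + L2) * mxnorm (x - Xincs n M N (w1, w2)).
    have -> : phi x - psi x = (phi x - phi (Xincs n M N (w1, w2))) -
        (psi x - psi (Xincs n M N (w1, w2))) by rewrite heq; ring.
    by apply: le_trans (ler_normB _ _) _; rewrite mulrDl; apply: lerD.
  apply: le_trans hF _.
  have hm0 := mxnorm_ge0 (x - Xincs n M N (w1, w2)).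
  have hL0 : 0 <= L1 + L2 by lra.
  have he := small_eps hL0 e0; rewrite -/eps in he.
  have h3 : (L1 + L2) * mxnorm (x - Xincs n M N (w1, w2)) <=
            (L1 + L2) * (inf (dset M a) + inf (dset N b) + 2 * eps).
    apply: ler_wpM2l => //; apply: le_trans hxy _; lra.
  apply: le_trans h3 _; rewrite mulrDr; lra.
set B := Bgen (fun k => step1 E1 E2 n M N k) (Nn n).
have h1 : B phi 0 <= B (fun x => psi x + `|phi x - psi x|) 0.
  apply: B_mono => //; first exact: bLip_add.
  by move=> x; rewrite -lerBlDl ler_norm.
have h2 : B (fun x => psi x + `|phi x - psi x|) 0 <= B psi 0 + B (fun x => `|phi x - psi x|) 0.
  exact: B_subadd.
have h3 : B (fun x => `|phi x - psi x|) 0 <= B (fun x => K * G x) 0.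
  by apply: B_mono => //; apply: bLip_scale.
have h4 : B (fun x => K * G x) 0 = K * B G 0 by apply: B_homog.
have h5 : B G 0 <= B (fun x => dfun M (lsubmx x)) 0 + B (fun x => dfun N (rsubmx x)) 0.
  exact: B_subadd.
have h6 : B (fun x => dfun M (lsubmx x)) 0 = 0.
  rewrite /B (relM E1 M N _ _ _ hS2) (collapse _ hS1 hP1 hI1); last exact: dfun_bLip.
  under eq_fun do rewrite dfun_Mincs.
  exact: (sl_const hS1).
have h7 : B (fun x => dfun N (rsubmx x)) 0 = 0.
  rewrite /B (relN E2 M N _ _ _ hS1) (collapse _ hS2 hP2 hI2); last exact: dfun_bLip.
  under eq_fun do rewrite dfun_Mincs.
  exact: (sl_const hS2).
rewrite h6 h7 addr0 in h5.
have : K * B G 0 <= 0 by rewrite -(mulr0 K); apply: ler_wpM2l.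
lra.
Qed.

Local Close Scope classical_set_scope.
Local Open Scope ring_scope.

Lemma En_repr (R : realType) (Omega1 Omega2 : Type)
    (H1 : (Omega1 -> R) -> Prop) (E1 : (Omega1 -> R) -> R)
    (H2 : (Omega2 -> R) -> Prop) (E2 : (Omega2 -> R) -> R)
    (d : nat) (M : R -> Omega1 -> 'rV[R]_d) (N : R -> Omega2 -> 'rV[R]_d) n
    (phi : 'M[R]_(Nn n, d + d) -> R) (Y : Omega1 * Omega2 -> R) :
  sublinear_space H1 E1 -> sublinear_space H2 E2 ->
  is_process H1 M -> is_process H2 N ->
  indep_incr E1 M -> indep_incr E2 N ->
  bLip phi -> (forall w, Y w = phi (Xincs n M N w)) ->
  En E1 E2 n M N Y = Bgen (fun k => step1 E1 E2 n M N k) (Nn n) phi 0.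
Proof.
move=> hS1 hS2 hP1 hP2 hI1 hI2 hphi hY.
rewrite /En; case: pselect => [h|hn]; last first.
  by exfalso; apply: hn; exists phi; split => //; apply: funext => w; rewrite hY.
case: (cid h) => phi0 [hb0 e0] /=.
rewrite /En_val backwardE.
have heq : forall w, phi0 (Xincs n M N w) = phi (Xincs n M N w).
  by move=> w; rewrite -hY e0.
apply/eqP; rewrite eq_le; apply/andP; split.
  exact: (WD hS1 hS2 hP1 hP2 hI1 hI2).
by apply: (WD hS1 hS2 hP1 hP2 hI1 hI2) => // w; rewrite heq.
Qed.

Lemma LastStep (R : realType) (Omega1 Omega2 : Type)
    (H1 : (Omega1 -> R) -> Prop) (E1 : (Omega1 -> R) -> R)
    (H2 : (Omega2 -> R) -> Prop) (E2 : (Omega2 -> R) -> R)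
    (d : nat) (M : R -> Omega1 -> 'rV[R]_d) (N : R -> Omega2 -> 'rV[R]_d) n k
    (f : 'M[R]_(Nn n, d + d) -> R) :
  sublinear_space H1 E1 -> sublinear_space H2 E2 ->
  is_process H1 M -> is_process H2 N ->
  (1 <= k <= Nn n)%N ->
  (forall x x' : 'M[R]_(Nn n, d + d), (forall (i : 'I_(Nn n)) j, (i < k)%N -> x i j = x' i j) -> f x = f x') ->
  Bgen (fun k => step1 E1 E2 n M N k) (Nn n) f =
  Bgen (fun k => step1 E1 E2 n M N k) (Nn n)
     (fun x => step1 E1 E2 n M N k.-1 (fun z => f (set_row x k.-1 z))).
Proof.
move=> hS1 hS2 hP1 hP2 hk hloc.
have hT : forall k, goodT (step1 E1 E2 n M N k) by move=> k'; exact: (good_step1 n k' hS1 hS2 hP1 hP2).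
set h := fun x => step1 E1 E2 n M N k.-1 (fun z => f (set_row x k.-1 z)).
have e : ((k.-1) + (Nn n - k).+1)%N = Nn n by lia.
suff : Bgen (fun k => step1 E1 E2 n M N k) ((k.-1) + (Nn n - k).+1) f =
       Bgen (fun k => step1 E1 E2 n M N k) ((k.-1) + (Nn n - k).+1) h by rewrite e.
apply: B_prop.
transitivity h.
  apply: funext => x /=.
  rewrite (B_L1 (r := k)) //.
  by have -> : (Nn n - (Nn n - k).+1)%N = k.-1 by lia.
symmetry; apply: (B_L1 (r := k.-1)) => //; last by lia.
move=> x x' hx; rewrite /h; congr step1; apply: funext => z; apply: hloc => i j hi.
rewrite !set_rowE; case: eqP => // hne; apply: hx; lia.
Qed.


Lemma part1 (R : realType) (Omega1 Omega2 : Type)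
    (H1 : (Omega1 -> R) -> Prop) (E1 : (Omega1 -> R) -> R)
    (H2 : (Omega2 -> R) -> Prop) (E2 : (Omega2 -> R) -> R)
    (d : nat) (M : R -> Omega1 -> 'rV[R]_d) (N : R -> Omega2 -> 'rV[R]_d) n :
  sublinear_space H1 E1 -> sublinear_space H2 E2 ->
  is_process H1 M -> is_process H2 N ->
  indep_incr E1 M -> indep_incr E2 N ->
  sublinear_space (Hn n M N) (En E1 E2 n M N).
Proof.
move=> hS1 hS2 hP1 hP2 hI1 hI2.
have hT : forall k, goodT (step1 E1 E2 n M N k) by move=> k'; exact: (good_step1 n k' hS1 hS2 hP1 hP2).
have rep := fun phi Y => @En_repr R Omega1 Omega2 H1 E1 H2 E2 d M N n phi Y hS1 hS2 hP1 hP2 hI1 hI2.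
split.
- move=> X Y [phX [bX ->]] [phY [bY ->]].
  by exists (fun x => phX x + phY x); split => //; apply: bLip_add.
- move=> c X [phX [bX ->]].
  by exists (fun x => c * phX x); split => //; apply: bLip_scale.
- move=> m X phi hX hphi.
  have [f hf] := choice hX.
  have hL : forall i, exists Li : R, 0 <= Li /\ forall x y, `|f i x - f i y| <= Li * mxnorm (x - y).
    move=> i; have [_ [Li [_ [Li0 [_ hLi]]]]] := bLipP (proj1 (hf i)).
    by exists Li.
  have [Lf hLf] := choice hL.
  exists (fun x => phi (\row_i f i x)); split.
    apply: (bLip_comp (K := \sum_i Lf i)) => // x y.
    apply: mxnorm_le; first by apply: mulr_ge0; [apply: sumr_ge0 => i _; case: (hLf i) | exact: mxnorm_ge0].
    move=> a i; rewrite !mxE; apply: le_trans (proj2 (hLf i) x y) _.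
    apply: ler_wpM2r; first exact: mxnorm_ge0.
    rewrite (bigD1 i) //= lerDl; apply: sumr_ge0 => j _; by case: (hLf j).
  apply: funext => w; congr phi; apply/matrixP => a i.
  rewrite (ord1 a) mxE; have [_ e] := hf i.
  by move: (congr1 (fun g => g w) e) => /= ->.
- move=> X Y [phX [bX eX]] [phY [bY eY]] hXY.
  rewrite (rep phY Y bY); last by move=> w; rewrite eY.
  rewrite (rep (fun x => Num.min (phX x) (phY x)) X); last first.
  + move=> w; rewrite eX; move: (hXY w); rewrite eX eY => h.
    by rewrite /Num.min; case: ltP => // h'; apply/eqP; rewrite eq_le h.
  + exact: bLip_min.
  apply: B_mono => //; first exact: bLip_min.
  by move=> x; rewrite ge_min lexx orbT.
- move=> c; rewrite (rep (fun _ => c)) //; first exact: B_const.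
  exact: bLip_const.
- move=> X Y [phX [bX eX]] [phY [bY eY]].
  rewrite (rep phX X bX); last by move=> w; rewrite eX.
  rewrite (rep phY Y bY); last by move=> w; rewrite eY.
  rewrite (rep (fun x => phX x + phY x)); last by move=> w; rewrite eX eY.
    exact: B_subadd.
  exact: bLip_add.
- move=> l X l0 [phX [bX eX]].
  rewrite (rep phX X bX); last by move=> w; rewrite eX.
  rewrite (rep (fun x => l * phX x)); last by move=> w; rewrite eX.
    exact: B_homog.
  exact: bLip_scale.
Qed.


Lemma part2 (R : realType) (Omega1 Omega2 : Type)
    (H1 : (Omega1 -> R) -> Prop) (E1 : (Omega1 -> R) -> R)
    (H2 : (Omega2 -> R) -> Prop) (E2 : (Omega2 -> R) -> R)
    (d : nat) (M : R -> Omega1 -> 'rV[R]_d) (N : R -> Omega2 -> 'rV[R]_d) n :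
  sublinear_space H1 E1 -> sublinear_space H2 E2 ->
  is_process H1 M -> is_process H2 N ->
  indep_incr E1 M -> indep_incr E2 N ->
  forall k : nat, (2 <= k <= Nn n)%N ->
       indep (En E1 E2 n M N)
         (fun w => \matrix_(i < k.-1) Xincr n M N i w)
         (fun w => Xincr n M N k.-1 w).
Proof.
move=> hS1 hS2 hP1 hP2 hI1 hI2 k hk phi hphi.
have hT : forall k, goodT (step1 E1 E2 n M N k) by move=> k'; exact: (good_step1 n k' hS1 hS2 hP1 hP2).
have rep := fun phi Y => @En_repr R Omega1 Omega2 H1 E1 H2 E2 d M N n phi Y hS1 hS2 hP1 hP2 hI1 hI2.
have hk1 : (k.-1 < Nn n)%N by lia.
have hk2 : (k.-1 <= Nn n)%N by lia.
have hk3 : (1 <= k <= Nn n)%N by lia.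
pose top := fun x : 'M[R]_(Nn n, d + d) => \matrix_(i < k.-1, j < d + d) x (widen_ord hk2 i) j.
pose rk := fun x : 'M[R]_(Nn n, d + d) => \row_(j < d + d) x (Ordinal hk1) j.
have topX : forall w, top (Xincs n M N w) = \matrix_(i < k.-1) Xincr n M N i w.
  by move=> w; apply/matrixP => i j; rewrite !mxE.
have rkX : forall w, rk (Xincs n M N w) = Xincr n M N k.-1 w.
  by move=> w; apply/rowP => j; rewrite !mxE.
have top_lip : forall x y, mxnorm (top x - top y) <= mxnorm (x - y).
  move=> x y; apply: mxnorm_le; first exact: mxnorm_ge0.
  by move=> i j; have := mxnorm_entry (x - y) (widen_ord hk2 i) j; rewrite !mxE.
have rk_lip : forall x y, mxnorm (rk x - rk y) <= mxnorm (x - y).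
  move=> x y; apply: mxnorm_le; first exact: mxnorm_ge0.
  by move=> i j; have := mxnorm_entry (x - y) (Ordinal hk1) j; rewrite !mxE.
have top_set : forall x z, top (set_row x k.-1 z) = top x.
  move=> x z; apply/matrixP => i j; rewrite !mxE.
  by case: eqP => //= hi; move: (ltn_ord i); rewrite hi ltnn.
have rk_set : forall x z, rk (set_row x k.-1 z) = z.
  by move=> x z; apply/rowP => j; rewrite !mxE eqxx.
have [[C hC] [L0 hL0]] := hphi.
set L := `|L0|.
have hL : forall x x' y y', `|phi x y - phi x' y'| <= L * (mxnorm (x - x') + mxnorm (y - y')).
  move=> x x' y y'; apply: le_trans (hL0 _ _ _ _) _; apply: ler_wpM2r; last exact: ler_norm.
  by rewrite addr_ge0 ?mxnorm_ge0.
have L0p : 0 <= L by rewrite normr_ge0.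
pose Phi := fun x => phi (top x) (rk x).
have bPhi : bLip Phi.
  apply: (bLip_intro (C := C) (L := 2 * L)); first by move=> x; apply: hC.
  move=> x y.
  apply: le_trans (hL _ _ _ _) _; rewrite [2 * L]mulrC -mulrA; apply: ler_wpM2l => //.
  by rewrite mulr2n mulrDl mul1r; apply: lerD.
have bphic : forall c, bLip (fun z => phi c z).
  move=> c; apply: (bLip_intro (C := C) (L := L)); first by move=> z; apply: hC.
  move=> z z'.
  by apply: le_trans (hL _ _ _ _) _; rewrite mxnorm_sub0 add0r.
pose g := fun c => step1 E1 E2 n M N k.-1 (fun z => phi c z).
have bg : bLip g.
  apply: (bLip_T (C := C) (L := L)) => //.
  move=> c c' z.
  by apply: le_trans (hL _ _ _ _) _; rewrite mxnorm_sub0 addr0.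
pose Psi := fun x => g (top x).
have bPsi : bLip Psi by apply: (bLip_comp (K := 1)) => // x y; rewrite mul1r.
rewrite (rep Phi _ bPhi); last by move=> w; rewrite /Phi topX rkX.
rewrite (_ : (fun w => En E1 E2 n M N (fun w' => phi (\matrix_(i < k.-1) Xincr n M N i w) (Xincr n M N k.-1 w'))) =
   (fun w => g (\matrix_(i < k.-1) Xincr n M N i w))); last first.
  apply: funext => w; set c := \matrix_(i < k.-1) Xincr n M N i w.
  rewrite (rep (fun x => phi c (rk x))); last by move=> w'; rewrite rkX.
    rewrite (LastStep hS1 hS2 hP1 hP2 hk3).
      rewrite (_ : (fun x => _) = fun _ => g c); first exact: B_const.
      by apply: funext => x; rewrite /g; congr step1; apply: funext => z; rewrite rk_set.
    move=> x x' hx; congr phi; apply/rowP => j; rewrite !mxE; apply: hx => /=; lia.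
  by apply: (bLip_comp (K := 1)) => // x y; rewrite mul1r.
rewrite (rep Psi _ bPsi); last by move=> w; rewrite /Psi topX.
rewrite (LastStep hS1 hS2 hP1 hP2 hk3); last first.
  move=> x x' hx; rewrite /Phi; congr phi.
    by apply/matrixP => i j; rewrite !mxE; apply: hx => /=; move: (ltn_ord i); lia.
  by apply/rowP => j; rewrite !mxE; apply: hx => /=; lia.
congr Bgen; apply: funext => x; rewrite /Psi /g; congr step1; apply: funext => z.
by rewrite /Phi top_set rk_set.
Qed.

Lemma part3M (R : realType) (Omega1 Omega2 : Type)
    (H1 : (Omega1 -> R) -> Prop) (E1 : (Omega1 -> R) -> R)
    (H2 : (Omega2 -> R) -> Prop) (E2 : (Omega2 -> R) -> R)
    (d : nat) (M : R -> Omega1 -> 'rV[R]_d) (N : R -> Omega2 -> 'rV[R]_d) n :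
  sublinear_space H1 E1 -> sublinear_space H2 E2 ->
  is_process H1 M -> is_process H2 N ->
  indep_incr E1 M -> indep_incr E2 N ->
  same_distr (En E1 E2 n M N) E1 (fun w => Mincs n M w.1) (Mincs n M).
Proof.
move=> hS1 hS2 hP1 hP2 hI1 hI2 phi hphi.
have rep := fun phi Y => @En_repr R Omega1 Omega2 H1 E1 H2 E2 d M N n phi Y hS1 hS2 hP1 hP2 hI1 hI2.
rewrite (rep (fun x => phi (lsubmx x))).
- by rewrite (relM E1 M N _ _ _ hS2) (collapse _ hS1 hP1 hI1).
- by apply: (bLip_comp (K := 1)) => // x y; rewrite mul1r; exact: mxnorm_lsub.
- by move=> w; rewrite Xincs_row row_mxKl.
Qed.

Lemma part3N (R : realType) (Omega1 Omega2 : Type)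
    (H1 : (Omega1 -> R) -> Prop) (E1 : (Omega1 -> R) -> R)
    (H2 : (Omega2 -> R) -> Prop) (E2 : (Omega2 -> R) -> R)
    (d : nat) (M : R -> Omega1 -> 'rV[R]_d) (N : R -> Omega2 -> 'rV[R]_d) n :
  sublinear_space H1 E1 -> sublinear_space H2 E2 ->
  is_process H1 M -> is_process H2 N ->
  indep_incr E1 M -> indep_incr E2 N ->
  same_distr (En E1 E2 n M N) E2 (fun w => Mincs n N w.2) (Mincs n N).
Proof.
move=> hS1 hS2 hP1 hP2 hI1 hI2 phi hphi.
have rep := fun phi Y => @En_repr R Omega1 Omega2 H1 E1 H2 E2 d M N n phi Y hS1 hS2 hP1 hP2 hI1 hI2.
rewrite (rep (fun x => phi (rsubmx x))).
- by rewrite (relN E2 M N _ _ _ hS1) (collapse _ hS2 hP2 hI2).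
- by apply: (bLip_comp (K := 1)) => // x y; rewrite mul1r; exact: mxnorm_rsub.
- by move=> w; rewrite Xincs_row row_mxKr.
Qed.

Theorem lemma3p2 (R : realType) (Omega1 Omega2 : Type)
    (H1 : (Omega1 -> R) -> Prop) (E1 : (Omega1 -> R) -> R)
    (H2 : (Omega2 -> R) -> Prop) (E2 : (Omega2 -> R) -> R)
    (d : nat) (M : R -> Omega1 -> 'rV[R]_d) (N : R -> Omega2 -> 'rV[R]_d) :
  sublinear_space H1 E1 -> sublinear_space H2 E2 ->
  is_process H1 M -> is_process H2 N ->
  indep_incr E1 M -> indep_incr E2 N ->
  condA H1 E1 H2 E2 M N ->
  forall n : nat, (1 <= n)%N ->
    sublinear_space (Hn n M N) (En E1 E2 n M N) /\
    (forall k : nat, (2 <= k <= Nn n)%N ->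
       indep (En E1 E2 n M N)
         (fun w => \matrix_(i < k.-1) Xincr n M N i w)
         (fun w => Xincr n M N k.-1 w)) /\
    same_distr (En E1 E2 n M N) E1 (fun w => Mincs n M w.1) (Mincs n M) /\
    same_distr (En E1 E2 n M N) E2 (fun w => Mincs n N w.2) (Mincs n N).
Proof.
move=> hS1 hS2 hP1 hP2 hI1 hI2 _ n _.
split; first exact: (part1 n hS1 hS2 hP1 hP2 hI1 hI2).
split; first exact: (part2 (n:=n) hS1 hS2 hP1 hP2 hI1 hI2).
split; first exact: (part3M (n:=n) hS1 hS2 hP1 hP2 hI1 hI2).
exact: (part3N (n:=n) hS1 hS2 hP1 hP2 hI1 hI2).
Qed.
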